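(* In a Markov category $\mathcal C$, for all $p\colon A\to X$ and $f,g\colon X\to Y$: if $f$ and $g$ are $p$-dilationally equal, then $f$ and $g$ are $p$-almost surely equal. The converse implication holds for all such $p,f,g$ if and only if $\mathcal C$ is causal.
   Context: A Markov category is a symmetric monoidal category $(\mathcal C,\otimes,I)$ with commutative comonoids $\mathrm{copy}_X\colon X\to X\otimes X$, $\mathrm{del}_X\colon X\to I$ compatible with $\otimes$, with $I$ terminal. A dilation of $p\colon A\to X$ is a morphism $\pi\colon A\to X\otimes E$ with $(\mathrm{id}_X\otimes\mathrm{del}_E)\circ\pi=p$. For $p\colon A\to X$ and $f,g\colon X\to Y$: $f,g$ are $p$-dilationally equal if for every dilation $\pi\colon A\to X\otimes E$ of $p$, $(f\otimes\mathrm{id}_E)\circ\pi=(g\otimes\mathrm{id}_E)\circ\pi$; they are $p$-almost surely equal if $(\mathrm{id}_X\otimes f)\circ\mathrm{copy}_X\circ p=(\mathrm{id}_X\otimes g)\circ\mathrm{copy}_X\circ p$. $\mathcal C$ is causal if for all $f\colon A\to W$, $g\colon W\to X$, $h_1,h_2\colon X\to Y$ with $(\mathrm{id}_X\otimes h_1)\circ\mathrm{copy}_X\circ g\circ f=(\mathrm{id}_X\otimes h_2)\circ\mathrm{copy}_X\circ g\circ f$, also $\big(\mathrm{id}_W\otimes((\mathrm{id}_X\otimes h_1)\circ\mathrm{copy}_X\circ g)\big)\circ\mathrm{copy}_W\circ f=\big(\mathrm{id}_W\otimes((\mathrm{id}_X\otimes h_2)\circ\mathrm{copy}_X\circ g)\big)\circ\mathrm{copy}_W\circ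 f$. *)

(* Defs.v *)
(* Morphism equality is Leibniz equality. *)

Set Implicit Arguments.
Unset Strict Implicit.

Record MarkovCat := {
  Obj : Type;
  Hom : Obj -> Obj -> Type;
  comp : forall (A B C : Obj), Hom B C -> Hom A B -> Hom A C;
  id : forall (A : Obj), Hom A A;
  comp_assoc : forall A B C D (f : Hom A B) (g : Hom B C) (h : Hom C D),
      comp h (comp g f) = comp (comp h g) f;
  comp_id_l : forall A B (f : Hom A B), comp (id B) f = f;
  comp_id_r : forall A B (f : Hom A B), comp f (id A) = f;
  tens : Obj -> Obj -> Obj;
  tensm : forall (A B C D : Obj), Hom A B -> Hom C D -> Hom (tens A C) (tens B D);
  tensm_id : forall A B, tensm (id A) (id B) = id (tens A B);
  tensm_comp : forall A B C A' B' C' (f : Hom A B) (g : Hom B C)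
      (f' : Hom A' B') (g' : Hom B' C'),
      tensm (comp g f) (comp g' f') = comp (tensm g g') (tensm f f');
  unit : Obj;
  alpha : forall (A B C : Obj), Hom (tens (tens A B) C) (tens A (tens B C));
  alpha_inv : forall (A B C : Obj), Hom (tens A (tens B C)) (tens (tens A B) C);
  alpha_iso1 : forall A B C, comp (alpha_inv A B C) (alpha A B C) = id _;
  alpha_iso2 : forall A B C, comp (alpha A B C) (alpha_inv A B C) = id _;
  alpha_nat : forall A B C A' B' C' (f : Hom A A') (g : Hom B B') (h : Hom C C'),
      comp (alpha A' B' C') (tensm (tensm f g) h)
      = comp (tensm f (tensm g h)) (alpha A B C);
  lambda : forall (A : Obj), Hom (tens unit A) A;
  lambda_inv : forall (A : Obj), Hom A (tens unit A);
  lambda_iso1 : forall A, comp (lambda_inv A) (lambda A) = id _;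
  lambda_iso2 : forall A, comp (lambda A) (lambda_inv A) = id _;
  lambda_nat : forall A B (f : Hom A B),
      comp (lambda B) (tensm (id unit) f) = comp f (lambda A);
  rho : forall (A : Obj), Hom (tens A unit) A;
  rho_inv : forall (A : Obj), Hom A (tens A unit);
  rho_iso1 : forall A, comp (rho_inv A) (rho A) = id _;
  rho_iso2 : forall A, comp (rho A) (rho_inv A) = id _;
  rho_nat : forall A B (f : Hom A B),
      comp (rho B) (tensm f (id unit)) = comp f (rho A);
  pentagon : forall A B C D,
      comp (alpha A B (tens C D)) (alpha (tens A B) C D)
      = comp (tensm (id A) (alpha B C D))
             ( comp (alpha A (tens B C) D) (tensm (alpha A B C) (id D)));
  triangle : forall A B,
      comp (tensm (id A) (lambda B)) (alpha A unit B) = tensm (rho A) (id B);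
  sigma : forall (A B : Obj), Hom (tens A B) (tens B A);
  sigma_nat : forall A B A' B' (f : Hom A A') (g : Hom B B'),
      comp (sigma A' B') (tensm f g) = comp (tensm g f) (sigma A B);
  sigma_invol : forall A B, comp (sigma B A) (sigma A B) = id _;
  hexagon : forall A B C,
      comp (alpha B C A) ( comp (sigma A (tens B C)) (alpha A B C))
      = comp (tensm (id B) (sigma A C))
             ( comp (alpha B A C) (tensm (sigma A B) (id C)));
  copy : forall (X : Obj), Hom X (tens X X);
  del : forall (X : Obj), Hom X unit;
  copy_coassoc : forall X,
      comp (alpha X X X) ( comp (tensm (copy X) (id X)) (copy X))
      = comp (tensm (id X) (copy X)) (copy X);
  copy_counit_l : forall X,
      comp (lambda X) ( comp (tensm (del X) (id X)) (copy X)) = id X;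
  copy_counit_r : forall X,
      comp (rho X) ( comp (tensm (id X) (del X)) (copy X)) = id X;
  copy_comm : forall X, comp (sigma X X) (copy X) = copy X;
  copy_tens : forall X Y,
      copy (tens X Y)
      = comp (alpha_inv X Y (tens X Y))
          ( comp (tensm (id X)
                   ( comp (alpha Y X Y)
                      ( comp (tensm (sigma X Y) (id Y)) (alpha_inv X Y Y))))
             ( comp (alpha X X (tens Y Y)) (tensm (copy X) (copy Y))));
  del_tens : forall X Y,
      del (tens X Y) = comp (lambda unit) (tensm (del X) (del Y));
  copy_unit : copy unit = lambda_inv unit;
  del_unique : forall X (f : Hom X unit), f = del X
}.

Arguments comp {m A B C} _ _.
Arguments id {m} A.
Arguments tens {m} _ _.
Arguments tensm {m A B C D} _ _.
Arguments unit {m}.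
Arguments rho {m} A.
Arguments copy {m} X.
Arguments del {m} X.

Section Defs.
Variable C : MarkovCat.

Definition is_dilation {A X E : Obj C} (p : Hom A X) (pi : Hom A (tens X E)) : Prop :=
 comp (rho X) (comp (tensm (id X) (del E)) pi) = p.

Definition dil_eq {A X Y : Obj C} (p : Hom A X) (f g : Hom X Y) : Prop :=
  forall (E : Obj C) (pi : Hom A (tens X E)), is_dilation p pi ->
   comp (tensm f (id E)) pi = comp (tensm g (id E)) pi.

Definition as_eq {A X Y : Obj C} (p : Hom A X) (f g : Hom X Y) : Prop :=
 comp (tensm (id X) f) (comp (copy X) p) = comp (tensm (id X) g) (comp (copy X) p).

Definition causal : Prop :=
  forall (A W X Y : Obj C) (f : Hom A W) (g : Hom W X) (h1 h2 : Hom X Y),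
   comp (tensm (id X) h1) (comp (copy X) (comp g f))
      = comp (tensm (id X) h2) (comp (copy X) (comp g f)) ->
   comp (tensm (id W) (comp (tensm (id X) h1) (comp (copy X) g))) (comp (copy W) f)
      = comp (tensm (id W) (comp (tensm (id X) h2) (comp (copy X) g))) (comp (copy W) f).

End Defs.

(* Main.v *)
Require Import Defs.
Local Notation "g ∘ f" := (comp g f) (at level 44, right associativity).
Local Notation "f ⊗ g" := (tensm f g) (at level 30).


Lemma rw2 {C : MarkovCat} {A B B' D X : Obj C} (a : Hom B D) (b : Hom A B)
  (c : Hom B' D) (d : Hom A B') (x : Hom X A) : a ∘ b = c ∘ d -> a ∘ (b ∘ x) = c ∘ (d ∘ x).
Proof. intro H. rewrite !comp_assoc, H. reflexivity. Qed.

Lemma tens_split {C : MarkovCat} {A B A' B' : Obj C} (f : Hom A B) (g : Hom A' B') :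
  f ⊗ g = (f ⊗ id _) ∘ (id _ ⊗ g).
Proof. rewrite <- tensm_comp, comp_id_l, comp_id_r. reflexivity. Qed.

Lemma tens_split' {C : MarkovCat} {A B A' B' : Obj C} (f : Hom A B) (g : Hom A' B') :
  f ⊗ g = (id _ ⊗ g) ∘ (f ⊗ id _).
Proof. rewrite <- tensm_comp, comp_id_l, comp_id_r. reflexivity. Qed.

Lemma tens_compl {C : MarkovCat} {A B D E : Obj C} (f : Hom A B) (g : Hom B D) :
  (g ∘ f) ⊗ id E = (g ⊗ id E) ∘ (f ⊗ id E).
Proof. rewrite <- tensm_comp, comp_id_l. reflexivity. Qed.

Lemma tens_compr {C : MarkovCat} {A B D E : Obj C} (f : Hom A B) (g : Hom B D) :
  id E ⊗ (g ∘ f) = (id E ⊗ g) ∘ (id E ⊗ f).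
Proof. rewrite <- tensm_comp, comp_id_l. reflexivity. Qed.

Lemma alpha_inv_nat {C : MarkovCat} {A B D A' B' D' : Obj C} (f : Hom A A') (g : Hom B B') (h : Hom D D') :
  alpha_inv A' B' D' ∘ (f ⊗ (g ⊗ h)) = ((f ⊗ g) ⊗ h) ∘ alpha_inv A B D.
Proof.
  rewrite <- (comp_id_r (alpha_inv A' B' D' ∘ (f ⊗ (g ⊗ h)))).
  rewrite <- (alpha_iso2 A B D).
  rewrite <- !comp_assoc.
  rewrite (rw2 _ _ _ _ _ (eq_sym (alpha_nat f g h))).
  rewrite !comp_assoc, alpha_iso1, comp_id_l. reflexivity.
Qed.

Lemma lambda_mono {C : MarkovCat} {A B : Obj C} (a b : Hom A (tens B unit)) :
  True.
Proof. exact I. Qed.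

Lemma sigma_II {C : MarkovCat} : sigma (m:=C) unit unit = id _.
Proof.
  assert (H : lambda (m:=C) unit ∘ sigma unit unit = lambda unit ∘ id _).
  { rewrite (del_unique (lambda unit ∘ sigma unit unit)), (del_unique (lambda unit ∘ id _)). reflexivity. }
  rewrite <- (comp_id_l (sigma unit unit)), <- (lambda_iso1 unit), <- comp_assoc, H,
    comp_assoc, lambda_iso1, comp_id_l. reflexivity.
Qed.

Lemma triangle_inv {C : MarkovCat} (A B : Obj C) :
  (rho A ⊗ id B) ∘ alpha_inv A unit B = id A ⊗ lambda B.
Proof.
  rewrite <- triangle, <- comp_assoc, alpha_iso2, comp_id_r. reflexivity.
Qed.

Lemma rw1 {C : MarkovCat} {A B D X : Obj C} (a : Hom B D) (b : Hom A B)
  (c : Hom A D) (x : Hom X A) : a ∘ b = c -> a ∘ (b ∘ x) = c ∘ x.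
Proof. intro H. rewrite comp_assoc, H. reflexivity. Qed.

Definition pr1 {C : MarkovCat} (X E : Obj C) : Hom (tens X E) X := rho X ∘ (id X ⊗ del E).
Definition pr2 {C : MarkovCat} (X E : Obj C) : Hom (tens X E) E := lambda E ∘ (del X ⊗ id E).

Lemma step1 {C : MarkovCat} (X E : Obj C) :
  (pr1 X E ⊗ pr2 X E) ∘ alpha_inv X E (tens X E) = id X ⊗ (lambda E ∘ (del E ⊗ pr2 X E)).
Proof.
  assert (H : pr1 X E ⊗ pr2 X E = (rho X ⊗ id E) ∘ ((id X ⊗ del E) ⊗ pr2 X E)).
  { unfold pr1. rewrite <- tensm_comp, comp_id_l. reflexivity. }
  rewrite H, <- comp_assoc, <- (alpha_inv_nat (id X) (del E) (pr2 X E)).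
  rewrite comp_assoc, triangle_inv, <- tens_compr. reflexivity.
Qed.

Lemma step2 {C : MarkovCat} (X E : Obj C) :
  lambda E ∘ (del E ⊗ pr2 X E) ∘ alpha E X E ∘ (sigma X E ⊗ id E) ∘ alpha_inv X E E
  = lambda E ∘ (del X ⊗ (lambda E ∘ (del E ⊗ id E))).
Proof.
  assert (H1 : del E ⊗ pr2 X E = (id unit ⊗ lambda E) ∘ (del E ⊗ (del X ⊗ id E))).
  { unfold pr2. rewrite <- tensm_comp, comp_id_l. reflexivity. }
  rewrite H1, <- !comp_assoc.
  rewrite (rw2 _ _ _ _ _ (eq_sym (alpha_nat (del E) (del X) (id E)))).
  rewrite (rw1 _ _ _ _ (eq_sym (tens_compl _ _))).
  rewrite <- (sigma_nat (del X) (del E)), sigma_II, comp_id_l.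
  rewrite <- (alpha_inv_nat (del X) (del E) (id E)).
  rewrite (rw1 _ _ _ _ (alpha_iso2 _ _ _)), comp_id_l.
  rewrite <- tensm_comp, comp_id_l. reflexivity.
Qed.

Lemma step3 {C : MarkovCat} (X E : Obj C) :
  (id X ⊗ (lambda E ∘ (del X ⊗ (lambda E ∘ (del E ⊗ id E))))) ∘ alpha X X (tens E E)
    ∘ (copy X ⊗ copy E) = id _.
Proof.
  rewrite tens_compr, <- comp_assoc.
  rewrite (rw2 _ _ _ _ _ (eq_sym (alpha_nat (id X) (del X) _))).
  rewrite (rw1 _ _ _ _ (triangle _ _)).
  rewrite <- !tensm_comp, comp_id_l, <- !comp_assoc, copy_counit_r, copy_counit_l, tensm_id. reflexivity.
Qed.

Lemma Lproj {C : MarkovCat} (X E : Obj C) :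
  (pr1 X E ⊗ pr2 X E) ∘ copy (tens X E) = id _.
Proof.
  rewrite copy_tens.
  rewrite (rw1 _ _ _ _ (step1 _ _)).
  rewrite comp_assoc, <- tens_compr.
  rewrite <- !comp_assoc, step2. apply step3.
Qed.

Lemma rw3 {C : MarkovCat} {A B B' D X : Obj C} (a : Hom B D) (b : Hom B' B) (c : Hom A B')
  (d : Hom A D) (x : Hom X A) : a ∘ (b ∘ c) = d -> a ∘ (b ∘ (c ∘ x)) = d ∘ x.
Proof. intro H. rewrite !comp_assoc. rewrite <- (comp_assoc c b a), H. reflexivity. Qed.

Lemma counit_r' {C : MarkovCat} {A X : Obj C} (x : Hom A X) :
  rho X ∘ ((id X ⊗ del X) ∘ (copy X ∘ x)) = x.
Proof. rewrite (rw3 _ _ _ _ _ (copy_counit_r X)), comp_id_l. reflexivity. Qed.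

Lemma Lk {C : MarkovCat} {X Y : Obj C} (h : Hom X Y) :
  lambda Y ∘ ((del X ⊗ id Y) ∘ ((id X ⊗ h) ∘ copy X)) = h.
Proof.
  assert (E1 : (del X ⊗ id Y) ∘ (id X ⊗ h) = (id unit ⊗ h) ∘ (del X ⊗ id X)).
  { rewrite <- !tensm_comp, !comp_id_l, !comp_id_r. reflexivity. }
  rewrite (rw2 _ _ _ _ _ E1), (rw2 _ _ _ _ _ (lambda_nat h)).
  rewrite (copy_counit_l X), comp_id_r. reflexivity.
Qed.

Lemma Lext {C : MarkovCat} {A X E Y : Obj C} (pi : Hom A (tens X E)) (h : Hom X Y) :
  (h ⊗ id E) ∘ pi =
  (((lambda Y ∘ (del X ⊗ id Y)) ⊗ pr2 X E) ∘ sigma (tens X E) (tens X Y))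
  ∘ ((id _ ⊗ ((id X ⊗ h) ∘ (copy X ∘ pr1 X E))) ∘ (copy _ ∘ pi)).
Proof.
  rewrite <- comp_assoc.
  rewrite (rw2 _ _ _ _ _ (sigma_nat (id _) _)).
  rewrite (rw1 _ _ _ _ (copy_comm _)).
  rewrite (rw1 _ _ _ _ (eq_sym (tensm_comp _ _ _ _))), comp_id_r.
  rewrite <- !comp_assoc, (comp_assoc (pr1 X E) (copy X)).
  rewrite (rw3 _ _ _ _ _ (Lk h)).
  rewrite <- (comp_id_l (pr2 X E)), tensm_comp, <- comp_assoc.
  rewrite (rw1 _ _ _ _ (Lproj X E)), comp_id_l. reflexivity.
Qed.

Lemma L_cr {C : MarkovCat} {A X W : Obj C} (x : Hom A (tens X W)) :
  (rho X ⊗ id W) ∘ (((id X ⊗ del X) ⊗ id W) ∘ ((copy X ⊗ id W) ∘ x)) = x.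
Proof.
  rewrite (comp_assoc x), <- tens_compl.
  rewrite (comp_assoc x), <- tens_compl, copy_counit_r, tensm_id, comp_id_l. reflexivity.
Qed.

Lemma Hdil {C : MarkovCat} {A W X : Obj C} (f : Hom A W) (g : Hom W X) :
  is_dilation (g ∘ f)
    (alpha X X W ∘ ((copy X ⊗ id W) ∘ ((g ⊗ id W) ∘ (copy W ∘ f)))).
Proof.
  unfold is_dilation.
  rewrite <- (del_unique (del W ∘ (lambda W ∘ (del X ⊗ id W)))).
  rewrite !tens_compr, <- !comp_assoc.
  rewrite (rw2 _ _ _ _ _ (eq_sym (alpha_nat (id X) (del X) (id W)))).
  rewrite (rw1 _ _ _ _ (triangle _ _)).
  rewrite L_cr.
  assert (E1 : (id X ⊗ del W) ∘ (g ⊗ id W) = (g ⊗ id unit) ∘ (id W ⊗ del W)).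
  { rewrite <- !tensm_comp, !comp_id_l, !comp_id_r. reflexivity. }
  rewrite (rw2 _ _ _ _ _ E1), (rw1 _ _ _ _ (rho_nat g)), <- comp_assoc, counit_r'.
  reflexivity.
Qed.

Lemma LT {C : MarkovCat} {A W X Y : Obj C} (f : Hom A W) (g : Hom W X) (h : Hom X Y) :
  (id W ⊗ ((id X ⊗ h) ∘ (copy X ∘ g))) ∘ (copy W ∘ f)
  = (sigma (tens X Y) W ∘ ((sigma Y X ⊗ id W) ∘ alpha_inv Y X W))
    ∘ ((h ⊗ id (tens X W)) ∘ (alpha X X W ∘ ((copy X ⊗ id W) ∘ ((g ⊗ id W) ∘ (copy W ∘ f))))).
Proof.
  rewrite <- tensm_id.
  rewrite (rw2 _ _ _ _ _ (eq_sym (alpha_nat h (id X) (id W)))).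
  rewrite <- !comp_assoc.
  rewrite (rw1 _ _ _ _ (alpha_iso1 _ _ _)), comp_id_l.
  rewrite !(comp_assoc (copy W ∘ f)), <- !tens_compl.
  assert (K : (id X ⊗ h) ∘ (copy X ∘ g) = sigma Y X ∘ ((h ⊗ id X) ∘ (copy X ∘ g))).
  { rewrite (rw2 _ _ _ _ _ (sigma_nat h (id X))), (rw1 _ _ _ _ (copy_comm X)). reflexivity. }
  rewrite K.
  rewrite <- comp_assoc.   rewrite (rw2 _ _ _ _ _ (sigma_nat _ (id W))), (rw1 _ _ _ _ (copy_comm W)).
  reflexivity.
Qed.

Theorem proposition4p3 (C : MarkovCat) :
  (forall (A X Y : Obj C) (p : Hom A X) (f g : Hom X Y),
      dil_eq p f g -> as_eq p f g)
  /\
  ((forall (A X Y : Obj C) (p : Hom A X) (f g : Hom X Y),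
      as_eq p f g -> dil_eq p f g) <-> causal C).
Proof.
  split; [| split].
  - intros A X Y p f g H. unfold as_eq.
    assert (Hd : is_dilation p (copy X ∘ p)).
    { unfold is_dilation. apply counit_r'. }
    specialize (H X (copy X ∘ p) Hd).
    rewrite <- (copy_comm X), <- !comp_assoc.
    rewrite !(rw2 _ _ _ _ _ (eq_sym (sigma_nat _ (id X)))), H. reflexivity.
  - intros H A W X Y f g h1 h2 Hyp.
    pose proof (H A X Y (g ∘ f) h1 h2 Hyp _ _ (Hdil f g)) as Hd.
    rewrite !LT, Hd. reflexivity.
  - intros Hc A X Y p f g Has E pi Hpi.
    assert (Hp : pr1 X E ∘ pi = p).
    { unfold pr1. rewrite <- comp_assoc. exact Hpi. }
    pose proof (Hc A (tens X E) X Y pi (pr1 X E) f g) as Hc'.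
    rewrite Hp in Hc'. specialize (Hc' Has).
    rewrite (Lext pi f), (Lext pi g), Hc'. reflexivity.
Qed.
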